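(* Let $m,a,b,t\in\mathbb{N}$ with $m\geq 3$, $a\geq 1$, $t\in\{2,\ldots,m-1\}$ and $(t-1)(am+1)<bm+t<t(am+1)$, and let $S=\langle m,\ am+1,\ bm+t\rangle$ (a MANS-semigroup with embedding dimension $3$). Then the type $\mathrm{t}(S)$ equals $1$ if and only if $t$ divides $m$.
   Context: $\mathbb{N}=\{0,1,2,\ldots\}$. $\langle A\rangle$ is the submonoid of $(\mathbb{N},+)$ generated by $A$; a numerical semigroup is a submonoid of $\mathbb{N}$ with finite complement. A pseudo-Frobenius number of $S$ is an $x\in\mathbb{Z}\setminus S$ with $x+s\in S$ for all $s\in S\setminus\{0\}$; $\mathrm{PF}(S)$ is the set of them and $\mathrm{t}(S)=|\mathrm{PF}(S)|$ is the type of $S$. A MANS-semigroup is a numerical semigroup with $w(1)<\cdots<w(\mathrm{m}(S)-1)$, where $\mathrm{m}(S)$ is the least element of $S\setminus\{0\}$ and $w(i)$ the least element of $S$ congruent to $i$ modulo $\mathrm{m}(S)$. *)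

(* Defs.v *)
From mathcomp Require Import all_boot all_order all_algebra.
Set Implicit Arguments. Unset Strict Implicit. Unset Printing Implicit Defensive.
Import GRing.Theory Num.Theory.

Inductive gen_monoid (A : nat -> Prop) : nat -> Prop :=
  | gen_zero : gen_monoid A 0
  | gen_elt a : A a -> gen_monoid A a
  | gen_add x y : gen_monoid A x -> gen_monoid A y -> gen_monoid A (x + y).

Definition memZ (S : nat -> Prop) (z : int) : Prop :=
  exists n : nat, z = Posz n /\ S n.

Definition pseudo_frobenius (S : nat -> Prop) (x : int) : Prop :=
  ~ memZ S x /\ (forall s : nat, S s -> s <> 0%N -> memZ S (x + Posz s)%R).

(* is_type S k : the set PF(S) is finite with exactly k elements, i.e. t(S) = k *)
Definition is_type (S : nat -> Prop) (k : nat) : Prop :=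
  exists l : seq int, uniq l /\ (forall x, x \in l <-> pseudo_frobenius S x)
                      /\ size l = k.

(* Main.v *)
Require Import Defs.
From mathcomp Require Import all_boot all_order all_algebra zify.

Definition Sg m a b t := gen_monoid (fun x : nat => x = m \/ x = a * m + 1 \/ x = b * m + t).
Definition cf (a b t i : nat) := (i %/ t) * b + (i %% t) * a.

Lemma cfE a b t q r : (r < t)%N -> cf a b t (q* t + r) = (q* b + r* a)%N.
Proof.
move=> rt; have t0 : (0 < t)%N by apply: leq_ltn_trans rt.
by rewrite /cf divnMDl // modnMDl divn_small // modn_small // addn0.
Qed.

Lemma gen_mul m a b t g k : Sg m a b t g -> Sg m a b t (k * g).
Proof.
move=> Hg; elim: k => [|k IH]; first exact: gen_zero.
by rewrite mulSn; apply: gen_add.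
Qed.

Lemma gen_iff m a b t n : Sg m a b t n <->
  exists x y z, n = (x* m + y* (a* m+1) + z* (b* m+t))%N.
Proof.
split.
- elim => [|g [->|[->|->]]|x y _ [x1 [y1 [z1 ->]]] _ [x2 [y2 [z2 ->]]]].
  + by exists 0, 0, 0.
  + by exists 1, 0, 0; lia.
  + by exists 0, 1, 0; lia.
  + by exists 0, 0, 1; lia.
  + exists (x1+x2), (y1+y2), (z1+z2); rewrite !mulnDl; lia.
- move=> [x [y [z ->]]].
  apply: gen_add; [apply: gen_add|]; apply: gen_mul; apply: gen_elt; tauto.
Qed.

Lemma key a b t m y z k q r : (0 < m)%N -> (r < t)%N -> ((t-1) * a <= b)%N ->
  (b <= t * a)%N -> (y + z * t = k * m + q * t + r)%N -> (q * b + r * a <= y * a + z * b + k)%N.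
Proof.
move=> m0 rt h1 h2 E.
case: (leqP z q) => zq.
- have [d Eq] : exists d, q = (z + d)%N by exists (q - z); lia.
  subst q.
  have Ey : y = (k * m + d * t + r)%N by rewrite mulnDl in E; lia.
  have h3 : (d * b <= d * (t * a))%N by rewrite leq_mul2l h2 orbT.
  have h4 : (y * a = k * m * a + d * (t * a) + r * a)%N by rewrite Ey !mulnDl mulnA.
  rewrite mulnDl; lia.
- have [d Ez] : exists d, z = (q + d.+1)%N by exists (z - q).-1; lia.
  subst z.
  have h3 : (r * a <= (t-1) * a)%N by rewrite leq_mul2r; apply/orP; right; lia.
  have h4 : (b <= d.+1 * b)%N by rewrite leq_pmull.
  rewrite mulnDl; lia.
Qed.

Lemma memS m a b t Q i : (0 < t)%N -> ((t-1) * a <= b)%N -> (b <= t * a)%N ->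
  (i < m)%N -> Sg m a b t (Q * m + i) <-> (cf a b t i <= Q)%N.
Proof.
move=> t0 h1 h2 im; have m0 : (0 < m)%N by apply: leq_ltn_trans im.
split.
- case/gen_iff => x [y [z E]].
  set N := (y + z * t)%N.
  have EN := divn_eq N m.
  have E2 : (Q * m + i = (x + y * a + z * b + N %/ m) * m + N %% m)%N.
    rewrite E; rewrite {1}/N in EN *.
    rewrite !mulnDl !mulnDr !muln1 mulnA mulnA. lia.
  have Hi : i = N %% m.
    move: (congr1 (modn^~ m) E2) => /=; rewrite !modnMDl modn_small // modn_mod.
    done.
  have HQ : Q = (x + y * a + z * b + N %/ m)%N.
    move: (congr1 (divn^~ m) E2); rewrite !divnMDl // (divn_small im) (divn_small (ltn_pmod _ m0)).
    by rewrite !addn0.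
  have Ej := divn_eq (N %% m) t.
  have := @key a b t m y z (N %/ m) ((N %% m) %/ t) ((N %% m) %% t) m0 (ltn_pmod _ t0) h1 h2.
  rewrite /cf Hi HQ; move=> K.
  have : (y * a + z * b + N %/ m <= x + y * a + z * b + N %/ m)%N by lia.
  apply: leq_trans; apply: K; rewrite /N in EN Ej *; lia.
- move=> hc; apply/gen_iff.
  exists (Q - cf a b t i), (i %% t), (i %/ t).
  have Ei := divn_eq i t.
  have : ((Q - cf a b t i) * m + cf a b t i * m = Q * m)%N by rewrite -mulnDl subnK.
  rewrite /cf !mulnDl !mulnDr !muln1 !mulnA; lia.
Qed.

Lemma memZ_pos (S : nat -> Prop) n : memZ S (Posz n) <-> S n.
Proof. by split => [[k [[->] H]]|H] //; exists n. Qed.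

Lemma closed_gen m a b t n : Sg m a b t (n + m) -> Sg m a b t (n + (a * m + 1)) ->
  Sg m a b t (n + (b * m + t)) -> forall s, Sg m a b t s -> s <> 0%N -> Sg m a b t (n + s).
Proof.
move=> H1 H2 H3 s; elim => [|g [->|[->|->]] //|x y Hx IHx Hy IHy] // nz.
case: (eqVneq x 0%N) => [e|x0]; first by subst x; rewrite add0n; apply: IHy; lia.
rewrite addnA; apply: gen_add; first by apply: IHx; apply/eqP.
done.
Qed.

Lemma cf0 a b t i : (0 < a)%N -> (0 < b)%N -> (0 < t)%N -> cf a b t i = 0%N -> i = 0%N.
Proof.
move=> a0 b0 t0; rewrite /cf => h.
have Ei := divn_eq i t.
move/eqP: h; rewrite addn_eq0 => /andP [/eqP h1 /eqP h2].
move/eqP: h1; rewrite muln_eq0 => /orP [/eqP e|]; last by lia.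
move/eqP: h2; rewrite muln_eq0 => /orP [/eqP e'|]; last by lia.
by rewrite Ei e e'.
Qed.

Lemma pfB m a b t i : (3 <= m)%N -> (1 <= a)%N -> (2 <= t)%N -> (t <= m - 1)%N ->
  ((t-1) * a <= b)%N -> (b < t * a)%N ->
  (m - t <= i)%N -> (i < m)%N -> (i.+1 = m \/ (t %| i.+1)%N) ->
  pseudo_frobenius (Sg m a b t) (Posz ((cf a b t i).-1 * m + i)).
Proof.
move=> m3 a1 t2 tm h1 h2 i1 i2 hi.
have t0 : (0 < t)%N by lia.
have b0 : (0 < b)%N by nia.
have h2' : (b <= t * a)%N by lia.
have c0 : (0 < cf a b t i)%N.
  rewrite lt0n; apply/eqP => /(@cf0 a b t i a1 b0 t0); lia.
set c := cf a b t i in c0 *.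
split.
- rewrite memZ_pos => /memS; move=> /(_ t0 h1 h2' i2); lia.
- move=> s Hs s0; rewrite -PoszD memZ_pos; apply: closed_gen => //.
  + have -> : (c.-1 * m + i + m = c * m + i)%N by rewrite -(prednK c0) mulSn; lia.
    by apply/memS.
  + case: (eqVneq i.+1 m) => [e|ne].
    * have -> : (c.-1 * m + i + (a * m + 1) = (c.-1 + a).+1 * m + 0)%N.
        rewrite !mulSn !mulnDl -e; lia.
      apply/memS => //; [lia|by rewrite /cf div0n mod0n].
    * case: hi => [e|/dvdnP [p Ep]]; first by rewrite e eqxx in ne.
      have -> : (c.-1 * m + i + (a * m + 1) = (c.-1 + a) * m + i.+1)%N.
        rewrite !mulnDl; lia.
      apply/memS; [lia|lia|lia|lia|].
      have p0 : (0 < p)%N by case: p Ep => //.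
      have Ei : i = (p.-1 * t + (t - 1))%N.
        by move: Ep; rewrite -(prednK p0) mulSn; lia.
      have Ec : c = (p.-1 * b + (t-1) * a)%N by rewrite /c Ei cfE //; lia.
      rewrite Ep -[p * t]addn0 cfE //.
      rewrite -{1}(prednK p0) mulSn; lia.
  + have -> : (c.-1 * m + i + (b * m + t) = (c + b) * m + (i + t - m))%N.
      rewrite -(prednK c0) !mulnDl mulSn; lia.
    apply/memS; [lia|lia|lia|lia|].
    rewrite -[i + t - m]add0n -[0%N](mul0n t) cfE; last by lia.
    have : ((i + t - m) * a <= (t-1) * a)%N by rewrite leq_mul2r; apply/orP; right; lia.
    lia.
Qed.

Lemma pfA m a b t x : (3 <= m)%N -> (1 <= a)%N -> (2 <= t)%N -> (t <= m - 1)%N ->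
  ((t-1) * a <= b)%N -> (b < t * a)%N ->
  pseudo_frobenius (Sg m a b t) x ->
  exists i, [/\ (m - t <= i)%N, (i < m)%N, (i.+1 = m \/ (t %| i.+1)%N) &
             x = Posz ((cf a b t i).-1 * m + i)].
Proof.
move=> m3 a1 t2 tm h1 h2 [nx H].
have t0 : (0 < t)%N by lia.
have m0 : (0 < m)%N by lia.
have b0 : (0 < b)%N by nia.
have h2' : (b <= t * a)%N by lia.
have g0 : Sg m a b t m by apply: gen_elt; left.
have g1 : Sg m a b t (a * m + 1) by apply: gen_elt; right; left.
have g2 : Sg m a b t (b * m + t) by apply: gen_elt; right; right.
have Hm := H m g0 ltac:(lia).
have H1 := H (a * m + 1)%N g1 ltac:(lia).
have H2 := H (b * m + t)%N g2 ltac:(lia).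
case: x nx Hm H1 H2 {H} => [n|k] nx Hm H1 H2.
- move: nx Hm H1 H2; rewrite -!PoszD !memZ_pos.
  rewrite (divn_eq n m); set Q := (n %/ m)%N; set i := (n %% m)%N.
  have im : (i < m)%N by rewrite ltn_pmod.
  move=> nx Hm H1 H2.
  have nc : ~ (cf a b t i <= Q)%N by move=> c; apply: nx; apply/memS.
  have Hc : (cf a b t i <= Q.+1)%N.
    apply/(memS _ _ _ _ _ _ t0 h1 h2' im).
    by move: Hm; rewrite mulSn; congr Sg; lia.
  have EQ : cf a b t i = Q.+1 by lia.
  have Ei := divn_eq i t; set q := (i %/ t)%N in Ei; set r := (i %% t)%N in Ei.
  have rt : (r < t)%N by rewrite ltn_pmod.
  have ci : cf a b t i = (q * b + r * a)%N by [].
  have it : (m - t <= i)%N.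
    case: (leqP m (i + t)) => [|lt]; first lia.
    have : (cf a b t (i + t) <= Q + b)%N.
      apply/(memS _ _ _ _ _ _ t0 h1 h2' lt).
      by move: H2; congr Sg; rewrite mulnDl; lia.
    have -> : (i + t = q.+1 * t + r)%N by rewrite mulSn; lia.
    rewrite cfE // mulSn; lia.
  exists i; split => //; last by rewrite EQ.
  case: (eqVneq i.+1 m) => [e|ne]; [by left|right].
  have lt : (i.+1 < m)%N by lia.
  have : (cf a b t i.+1 <= Q + a)%N.
    apply/(memS _ _ _ _ _ _ t0 h1 h2' lt).
    by move: H1; congr Sg; rewrite mulnDl; lia.
  case: (ltngtP r.+1 t) => [rt'|tr|et].
  + have -> : (i.+1 = q * t + r.+1)%N by lia.
    rewrite cfE // mulSn; lia.
  + lia.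
  + move=> _; apply/dvdnP; exists q.+1; rewrite mulSn; lia.
- exfalso.
  case: Hm => n [En Sn].
  have Enk : (n + k.+1 = m)%N by move: En; rewrite NegzE; lia.
  have nm : (n < m)%N by lia.
  have : (cf a b t n <= 0)%N.
    apply/(memS _ _ _ _ _ _ t0 h1 h2' nm); by rewrite mul0n add0n.
  rewrite leqn0 => /eqP /(@cf0 a b t n a1 b0 t0) n0.
  case: H1 => n' [En' Sn'].
  have En2 : (n' = (a - 1) * m + 1)%N.
    move: En'; rewrite NegzE; rewrite mulnBl mul1n; move: (leq_pmull m a1); lia.
  have : (cf a b t 1 <= a - 1)%N.
    have m1 : (1 < m)%N by lia.
    apply/(memS m a b t (a-1) 1 t0 h1 h2' m1); by rewrite -En2.
  rewrite -[1%N]add0n -[0%N](mul0n t) cfE //; lia.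
Qed.

Theorem proposition3p21 (m a b t : nat) :
  (3 <= m)%N -> (1 <= a)%N -> (2 <= t)%N -> (t <= m - 1)%N ->
  ((t - 1) * (a * m + 1) < b * m + t)%N ->
  (b * m + t < t * (a * m + 1))%N ->
  is_type (gen_monoid (fun x => x = m \/ x = a * m + 1 \/ x = b * m + t)) 1
  <-> (t %| m)%N.
Proof.
move=> m3 a1 t2 tm H5 H6.
change (is_type (Sg m a b t) 1 <-> (t %| m)%N).
have m0 : (0 < m)%N by lia.
have h1 : ((t-1) * a <= b)%N.
  rewrite -(leq_pmul2r m0); move: H5; rewrite mulnDr muln1 mulnA; lia.
have h2 : (b < t * a)%N.
  rewrite -(ltn_pmul2r m0); move: H6; rewrite mulnDr muln1 mulnA; lia.
have e1 : (m - t <= m - 1)%N by lia.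
have e2 : (m - 1 < m)%N by lia.
have e3 : (m - 1).+1 = m by lia.
have pf0 := @pfB m a b t (m - 1) m3 a1 t2 tm h1 h2 e1 e2 (or_introl e3).
split.
- move=> [l [ul [Hl sz]]].
  apply/negPn/negP => ntm.
  have r0 : (0 < m %% t)%N by rewrite lt0n; apply: contra ntm => /eqP; move/eqP; rewrite -/(dvdn t m).
  have Em := divn_eq m t.
  have rt : (m %% t < t)%N by rewrite ltn_mod; lia.
  have q0 : (0 < m %/ t)%N by rewrite divn_gt0; lia.
  set i0 := ((m %/ t) * t - 1)%N.
  have f1 : (m - t <= i0)%N by rewrite /i0; lia.
  have f2 : (i0 < m)%N by rewrite /i0; lia.
  have f3 : (t %| i0.+1)%N by apply/dvdnP; exists (m %/ t); rewrite /i0; lia.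
  have pf1 := @pfB m a b t i0 m3 a1 t2 tm h1 h2 f1 f2 (or_intror f3).
  move/Hl: pf0; move/Hl: pf1.
  case: l {ul Hl} sz => [|y [|//]] //= _.
  rewrite !inE => /eqP d1 /eqP d2.
  move: d2; rewrite -d1 => [[]] /(congr1 (modn^~ m)) /=.
  rewrite !modnMDl !modn_small; lia.
- move=> tdm.
  exists [:: Posz ((cf a b t (m - 1)).-1 * m + (m - 1))]; split => //; split => // x.
  rewrite inE; split; first by move/eqP ->.
  move=> /pfA [] // i [i1 i2 hi ->].
  have -> : i = (m - 1)%N => //.
  case: hi => [|hi]; first lia.
  case: (eqVneq i.+1 m) => [|ne]; first lia.
  have : (t %| m - i.+1)%N by rewrite dvdn_sub.
  move/dvdn_leq; lia.
Qed.
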